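(* Let $n\ge2$ and let $N$ be a monoid containing elements $s_1,\dots,s_{n-1},a$ satisfying $s_i^2=1$, $(s_is_{i+1})^3=1$ for $1\le i\le n-2$, $(s_is_j)^2=1$ for $|i-j|\ge2$, and $s_ia=as_i$ for $2\le i\le n-1$. Define $\alpha_1=a$ and $\alpha_j=(s_{j-1}\cdots s_1)a(s_1\cdots s_{j-1})$ for $2\le j\le n$, and for $1\le i\le n-1$, $1\le j\le n$ let $\alpha_j^{s_i}=\alpha_{j-1}$ if $i=j-1$, $\alpha_j^{s_i}=\alpha_{j+1}$ if $i=j$, and $\alpha_j^{s_i}=\alpha_j$ otherwise. Then $s_i\alpha_j=\alpha_j^{s_i}s_i$ in $N$ for all $1\le i\le n-1$ and $1\le j\le n$. *)

(* Defs.v *)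
From mathcomp Require Import all_boot.
Set Implicit Arguments. Unset Strict Implicit. Unset Printing Implicit Defensive.

(* A monoid is given explicitly by a carrier M, a multiplication mul and a
   unit one (the axioms are hypotheses of the theorem). *)
Section MonoidDefs.
Variables (M : Type) (mul : M -> M -> M) (one : M).

Fixpoint mpow (x : M) (k : nat) : M :=
  if k is k'.+1 then mul x (mpow x k') else one.

Variable s : nat -> M.  (* s i = s_i, only i in 1..n-1 matter *)
Variable a : M.

Fixpoint sdesc (k : nat) : M :=
  if k is k'.+1 then mul (s k'.+1) (sdesc k') else one.
Fixpoint sasc (k : nat) : M :=
  if k is k'.+1 then mul (sasc k') (s k'.+1) else one.

Definition alpha (j : nat) : M :=
  if j == 1 then a else mul (mul (sdesc j.-1) a) (sasc j.-1).

Definition alpha_act (i j : nat) : M :=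
  if i == j.-1 then alpha j.-1 else if i == j then alpha j.+1 else alpha j.
End MonoidDefs.

(* Main.v *)
Require Import Defs.
From mathcomp Require Import all_boot.
From mathcomp Require Import zify.

Theorem lemma3 (M : Type) (mul : M -> M -> M) (one : M)
  (mulA : forall x y z, mul x (mul y z) = mul (mul x y) z)
  (mul1 : forall x, mul one x = x) (mul1r : forall x, mul x one = x)
  (n : nat) (hn : 2 <= n) (s : nat -> M) (a : M)
  (hs2 : forall i, 1 <= i <= n - 1 -> mul (s i) (s i) = one)
  (hs3 : forall i, 1 <= i <= n - 2 ->
           mpow mul one (mul (s i) (s i.+1)) 3 = one)
  (hs22 : forall i j, 1 <= i <= n - 1 -> 1 <= j <= n - 1 ->
           (i + 2 <= j) || (j + 2 <= i) ->
           mpow mul one (mul (s i) (s j)) 2 = one)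
  (hsa : forall i, 2 <= i <= n - 1 -> mul (s i) a = mul a (s i)) :
  forall i j, 1 <= i <= n - 1 -> 1 <= j <= n ->
    mul (s i) (alpha mul one s a j) = mul (alpha_act mul one s a i j) (s i).
Proof.
have inv : forall i y, 1 <= i <= n - 1 -> mul (s i) (mul (s i) y) = y.
  by move=> i y Hi; rewrite mulA hs2 ?mul1.
have comm : forall i j, 1 <= i <= n - 1 -> 1 <= j <= n - 1 ->
    (i + 2 <= j) || (j + 2 <= i) -> mul (s i) (s j) = mul (s j) (s i).
  move=> i j Hi Hj Hij; have h := hs22 i j Hi Hj Hij; rewrite /= mul1r in h.
  rewrite -[RHS]mul1 -{1}h -!mulA (inv j) // hs2 // mul1r //.
have braid : forall i, 1 <= i <= n - 2 ->
    mul (s i) (mul (s i.+1) (s i)) = mul (s i.+1) (mul (s i) (s i.+1)).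
  move=> i Hi; have h := hs3 i Hi; rewrite /= mul1r in h.
  have Hi1 : 1 <= i <= n - 1 by lia.
  have Hi2 : 1 <= i.+1 <= n - 1 by lia.
  by rewrite -[RHS]mul1 -{1}h -!mulA (inv i.+1) // (inv i) // (hs2 i.+1) // mul1r.
have cd : forall m k, k + 2 <= m -> m <= n - 1 ->
    mul (s m) (sdesc mul one s k) = mul (sdesc mul one s k) (s m).
  move=> m; elim=> [|k IH] Hk Hm /=; first by rewrite mul1 mul1r.
  rewrite mulA (comm m k.+1); [|lia|lia|apply/orP; right; lia].
  by rewrite -mulA IH ?mulA //; lia.
have ca : forall m k, k + 2 <= m -> m <= n - 1 ->
    mul (s m) (sasc mul one s k) = mul (sasc mul one s k) (s m).
  move=> m; elim=> [|k IH] Hk Hm /=; first by rewrite mul1 mul1r.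
  rewrite mulA IH; [|lia|lia].
  rewrite -mulA (comm m k.+1); [by []|lia|lia|apply/orP; right; lia].
have bd : forall i k, 1 <= i -> i + 1 <= k <= n - 1 ->
    mul (s i) (sdesc mul one s k) = mul (sdesc mul one s k) (s i.+1).
  move=> i; elim=> [|k IH] Hi Hk; first by lia.
  have [Eki|Hne] := eqVneq k i.
    subst k; case: i Hi IH Hk => [|i] Hi IH Hk //=.
    rewrite !mulA -(mulA (s i.+1)) braid; last by lia.
    rewrite -!mulA (cd i.+2 i); [|lia|lia].
    by rewrite !mulA.
  rewrite /= mulA (comm i k.+1); [|lia|lia|apply/orP; left; lia].
  by rewrite -!mulA IH //; lia.
have ba : forall i k, 1 <= i -> i + 1 <= k <= n - 1 ->
    mul (sasc mul one s k) (s i) = mul (s i.+1) (sasc mul one s k).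
  move=> i; elim=> [|k IH] Hi Hk; first by lia.
  have [Eki|Hne] := eqVneq k i.
    subst k; case: i Hi IH Hk => [|i] Hi IH Hk //=.
    rewrite -!mulA braid; last by lia.
    rewrite !mulA -(ca i.+2 i); [|lia|lia].
    by rewrite -!mulA.
  rewrite /= -mulA -(comm i k.+1); [|lia|lia|apply/orP; left; lia].
  by rewrite !mulA IH //; lia.
have E : forall j, 1 <= j ->
    alpha mul one s a j = mul (mul (sdesc mul one s j.-1) a) (sasc mul one s j.-1).
  move=> [|[|j]] // _; by rewrite /alpha /= mul1 mul1r.
move=> i j Hi Hj; rewrite /alpha_act.
have [Hij|Hij] := eqVneq i j.-1.
  have Ej : j = i.+1 by lia.
  rewrite Ej /= (E i.+1) // (E i) //=; last by lia.
  case: i Hi {Hij Ej} => [|i] Hi //=.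
  by rewrite -!mulA !(inv i.+1) //.
have [Hij2|Hij2] := eqVneq i j.
  subst i; rewrite (E j.+1) // (E j); last by lia.
  case: j Hi Hij Hj => [|j] Hi Hij Hj //=.
  by rewrite -!mulA (hs2 j.+1) // mul1r.
rewrite (E j); last by lia.
case: (ltnP i j) => Hlt.
  have Hk : i + 1 <= j.-1 <= n - 1 by lia.
  rewrite !mulA bd //; last by lia.
  rewrite -(mulA _ (s i.+1)) hsa; last by lia.
  by rewrite mulA -!mulA ba //; lia.
rewrite !mulA cd; [|lia|lia].
rewrite -(mulA _ (s i)) hsa; last by lia.
by rewrite mulA -!mulA ca //; lia.
Qed.
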